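(* Let $J$ be a bounded open interval with $a>0$ on $J$, and let $x_0\in\partial J$ with $a(x_0)=0$. Let $\lambda\in\mathbb R$ and let $f\in C^1(J)$ be a bounded solution of $a(x)f'+H(x,f)=\lambda$ in $J$. Then $\lambda\ge\hat\lambda(x_0)$, and the limit $\lim_{x\to x_0,\,x\in J}f(x)$ exists and belongs to $\{p^-_\lambda(x_0),p^+_\lambda(x_0)\}$.
   Context: Deterministic setting: $a:\mathbb R\to[0,1]$ with $\sqrt a$ $\kappa$-Lipschitz. $H:\mathbb R\times\mathbb R\to\mathbb R$ belongs to $\mathscr H_{sqc}(\alpha_0,\alpha_1,\gamma,\eta)$ ($\gamma>2,\eta>0$): (H1) $\alpha_0|p|^\gamma-1/\alpha_0\le H(x,p)\le\alpha_1(|p|^\gamma+1)$, (H2) $|H(x,p)-H(x,q)|\le\alpha_1(|p|+|q|+1)^{\gamma-1}|p-q|$, (H3) $|H(x,p)-H(y,p)|\le\alpha_1(|p|^\gamma+1)|x-y|$, $H(x,\cdot)$ strictly quasiconvex with unique minimizer $\hat p(x)$, and $H(x,p_1)-H(x,p_2)\ge\eta|p_1-p_2|$ for $p_1<p_2\le\hat p(x)$, $H(x,p_2)-H(x,p_1)\ge\eta|p_1-p_2|$ for $p_2>p_1\ge\hat p(x)$. Notation: $\hat\lambda(x):=\min_pH(x,p)=H(x,\hat p(x))$; for $\lambda\ge\hat\lambda(x)$, $p^-_\lambda(x)\le p^+_\lambda(x)$ are defined by $\{p:H(x,p)\le\lambda\}=[p^-_\lambda(x),p^+_\lambda(x)]$.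 *)

(* Defs.v *)
From Stdlib Require Import Reals Lra.
From Coquelicot Require Import Coquelicot.
Open Scope R_scope.

(* Real power of a nonnegative base, with the convention 0^y = 0
   (Stdlib's Rpower 0 y = 1, which is wrong for |p|^gamma at p = 0). *)
Definition rpow (x y : R) : R := if Rle_dec x 0 then 0 else Rpower x y.

Definition diffusion_ok (kappa : R) (a : R -> R) : Prop :=
  (forall x, 0 <= a x <= 1) /\
  (forall x y, Rabs (sqrt (a x) - sqrt (a y)) <= kappa * Rabs (x - y)).

Definition strictly_quasiconvex (g : R -> R) : Prop :=
  forall p q t, p <> q -> 0 < t < 1 ->
    g (t * p + (1 - t) * q) < Rmax (g p) (g q).

Definition unique_minimizer (g : R -> R) (p : R) : Prop :=
  (forall q, g p <= g q) /\ (forall q, (forall r, g q <= g r) -> q = p).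

Definition H_sqc (alpha0 alpha1 gamma eta : R) (H : R -> R -> R)
    (phat : R -> R) : Prop :=
  0 < alpha0 /\ 0 < alpha1 /\ 2 < gamma /\ 0 < eta /\
  (forall x p, alpha0 * rpow (Rabs p) gamma - / alpha0 <= H x p /\
               H x p <= alpha1 * (rpow (Rabs p) gamma + 1)) /\
  (forall x p q, Rabs (H x p - H x q) <=
      alpha1 * rpow (Rabs p + Rabs q + 1) (gamma - 1) * Rabs (p - q)) /\
  (forall x y p, Rabs (H x p - H y p) <=
      alpha1 * (rpow (Rabs p) gamma + 1) * Rabs (x - y)) /\
  (forall x, strictly_quasiconvex (H x)) /\
  (forall x, unique_minimizer (H x) (phat x)) /\
  (forall x p1 p2, p1 < p2 -> p2 <= phat x ->
      H x p1 - H x p2 >= eta * Rabs (p1 - p2)) /\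
  (forall x p1 p2, p2 > p1 -> p1 >= phat x ->
      H x p2 - H x p1 >= eta * Rabs (p1 - p2)).

(* [pm, pp] = {p : H(x,p) <= lam}, i.e. pm = p^-_lam(x), pp = p^+_lam(x). *)
Definition sublevel_ends (H : R -> R -> R) (x lam pm pp : R) : Prop :=
  pm <= pp /\ forall p, H x p <= lam <-> pm <= p <= pp.

(* Main.v *)
Require Import Defs.
From Stdlib Require Import Reals Lra Classical.
From Coquelicot Require Import Coquelicot.
Open Scope R_scope.

Lemma deriv_cont (g : R -> R) (x l : R) : is_derive g x l -> continuity_pt g x.
Proof.
  intros H. apply continuity_pt_filterlim.
  apply (ex_derive_continuous g x). exists l; exact H.
Qed.

Lemma mono_lem (g dg : R -> R) lo hi x y :
  (forall t, lo < t < hi -> is_derive g t (dg t)) ->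
  (forall t, lo < t < hi -> 0 <= dg t) ->
  lo < x -> x <= y -> y < hi -> g x <= g y.
Proof.
  intros Hd Hp Hx Hxy Hy.
  destruct (MVT_gen g x y dg) as [z [Hz Heq]].
  - intros t Ht. apply Hd. rewrite Rmin_left in Ht by lra. rewrite Rmax_right in Ht by lra. lra.
  - intros t Ht. rewrite Rmin_left in Ht by lra. rewrite Rmax_right in Ht by lra.
    apply (deriv_cont g t (dg t)). apply Hd. lra.
  - rewrite Rmin_left in Hz by lra. rewrite Rmax_right in Hz by lra.
    assert (0 <= dg z) by (apply Hp; lra).
    assert (0 <= dg z * (y - x)) by (apply Rmult_le_pos; lra). lra.
Qed.

Lemma deriv_sign (h : R -> R) (v l : R) : is_derive h v l -> 0 < l ->
  exists eta, 0 < eta /\ forall t, Rabs (t - v) < eta ->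
   (v < t -> h v < h t) /\ (t < v -> h t < h v).
Proof.
  intros Hd Hl. apply is_derive_Reals in Hd.
  destruct (Hd (l/2)) as [del Hdel]. lra.
  exists del. split. apply cond_pos.
  intros t Ht.
  assert (Hq : forall t, t <> v -> Rabs (t - v) < del -> (h t - h v) / (t - v) > l/2).
  { intros t0 Hne Ht0. specialize (Hdel (t0 - v)).
    replace (v + (t0 - v)) with t0 in Hdel by ring.
    assert (Rabs ((h t0 - h v) / (t0 - v) - l) < l/2) by (apply Hdel; [lra| exact Ht0]).
    apply Rabs_def2 in H. lra. }
  split; intro Hlt.
  - assert (Hq1 := Hq t ltac:(lra) Ht).
    apply Rmult_gt_compat_r with (r := t - v) in Hq1; [|lra].
    unfold Rdiv in Hq1. rewrite Rmult_assoc, Rinv_l in Hq1 by lra.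
    assert (l / 2 * (t - v) > 0) by (apply Rmult_gt_0_compat; lra). lra.
  - assert (Hq1 := Hq t ltac:(lra) Ht).
    apply Rmult_gt_compat_r with (r := v - t) in Hq1; [|lra].
    unfold Rdiv in Hq1. 
    replace ((h t - h v) * / (t - v) * (v - t)) with (h v - h t) in Hq1 by (field; lra).
    assert (l / 2 * (v - t) > 0) by (apply Rmult_gt_0_compat; lra). lra.
Qed.

Lemma cont_eps (h : R -> R) (v : R) : continuity_pt h v ->
  forall eps, 0 < eps -> exists del, 0 < del /\ forall t, Rabs (t - v) < del -> Rabs (h t - h v) < eps.
Proof.
  intros Hc eps He. destruct (Hc eps He) as [alp [Ha Hb]].
  exists alp. split; auto. intros t Ht.
  destruct (Req_dec t v) as [->|Hne].
  - rewrite Rminus_diag, Rabs_R0. lra.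
  - apply (Hb t). split. split. exact I. auto. exact Ht.
Qed.

Lemma C1_aux (h dh : R -> R) lo hi t1 t3 :
  (forall t, lo < t < hi -> is_derive h t (dh t)) ->
  (forall t, lo < t < hi -> h t = 0 -> 0 < dh t) ->
  lo < t1 -> t1 < t3 -> t3 < hi -> 0 <= h t1 -> h t3 < 0 -> False.
Proof.
  intros Hd Hz Hlo H13 Hhi H1 H3.
  set (A := fun t => t1 <= t <= t3 /\ 0 <= h t).
  destruct (completeness A) as [v [Hub Hlub]].
  { exists t3. intros t [Ht _]. lra. }
  { exists t1. split; lra. }
  assert (Hv1 : t1 <= v) by (apply Hub; split; lra).
  assert (Hv3 : v <= t3) by (apply Hlub; intros t [Ht _]; lra).
  assert (Hcv : continuity_pt h v) by (apply (deriv_cont h v (dh v)); apply Hd; lra).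
  assert (Hhv : 0 <= h v).
  { destruct (Rle_or_lt 0 (h v)) as [|Hneg]; auto. exfalso.
    destruct (cont_eps h v Hcv (- h v)) as [del [Hdel Hc]]; [lra|].
    assert (v <= v - del); [|lra].
    apply Hlub. intros t [Ht Hht].
    assert (t <= v) by (apply Hub; split; auto).
    destruct (Rle_or_lt t (v - del)); auto.
    assert (Rabs (t - v) < del) by (apply Rabs_def1; lra).
    specialize (Hc t H2). apply Rabs_def2 in Hc. lra. }
  assert (Hvt3 : v < t3) by (destruct (Rle_lt_or_eq_dec v t3 Hv3); auto; subst; lra).
  assert (Hex : exists t, v < t <= t3 /\ 0 <= h t).
  { destruct (Rle_lt_or_eq_dec 0 (h v) Hhv) as [Hp|Hz0].
    - destruct (cont_eps h v Hcv (h v)) as [del [Hdel Hc]]; [lra|].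
      exists (Rmin (v + del/2) t3). split.
      + split. apply Rmin_glb_lt; lra. apply Rmin_r.
      + assert (Rabs (Rmin (v + del / 2) t3 - v) < del).
        { apply Rabs_def1. assert (Rmin (v + del / 2) t3 <= v + del/2) by apply Rmin_l. lra.
          assert (v < Rmin (v + del / 2) t3) by (apply Rmin_glb_lt; lra). lra. }
        specialize (Hc _ H). apply Rabs_def2 in Hc. lra.
    - assert (Hdp : 0 < dh v) by (apply Hz; [lra| auto]).
      destruct (deriv_sign h v (dh v)) as [eta [Heta Hs]]; [apply Hd; lra| auto|].
      exists (Rmin (v + eta/2) t3). split.
      + split. apply Rmin_glb_lt; lra. apply Rmin_r.
      + assert (Rabs (Rmin (v + eta / 2) t3 - v) < eta).
        { apply Rabs_def1. assert (Rmin (v + eta / 2) t3 <= v + eta/2) by apply Rmin_l. lra.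
          assert (v < Rmin (v + eta / 2) t3) by (apply Rmin_glb_lt; lra). lra. }
        destruct (Hs _ H) as [Hs1 _].
        assert (v < Rmin (v + eta / 2) t3) by (apply Rmin_glb_lt; lra).
        specialize (Hs1 H0). lra. }
  destruct Hex as [t [Ht Hht]].
  assert (t <= v) by (apply Hub; split; [lra|auto]). lra.
Qed.

Lemma C1 (h dh : R -> R) lo hi t1 t2 :
  (forall t, lo < t < hi -> is_derive h t (dh t)) ->
  (forall t, lo < t < hi -> h t = 0 -> 0 < dh t) ->
  lo < t1 -> t1 < t2 -> t2 < hi -> 0 <= h t1 -> 0 < h t2.
Proof.
  intros Hd Hz Hlo H12 Hhi H1.
  destruct (Rlt_or_le 0 (h t2)) as [|H2]; auto. exfalso.
  destruct (Rlt_or_le (h t2) 0) as [Hn|Hn].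
  - exact (C1_aux h dh lo hi t1 t2 Hd Hz Hlo H12 Hhi H1 Hn).
  - assert (Hz2 : h t2 = 0) by lra.
    assert (Hdp : 0 < dh t2) by (apply Hz; [lra| auto]).
    destruct (deriv_sign h t2 (dh t2)) as [eta [Heta Hs]]; [apply Hd; lra| auto|].
    set (t3 := Rmax ((t1 + t2)/2) (t2 - eta/2)).
    assert (Ht3a : (t1+t2)/2 <= t3) by apply Rmax_l.
    assert (Ht3b : t2 - eta/2 <= t3) by apply Rmax_r.
    assert (Ht3c : t3 < t2) by (apply Rmax_lub_lt; lra).
    assert (Rabs (t3 - t2) < eta) by (apply Rabs_def1; lra).
    destruct (Hs _ H) as [_ Hs2]. specialize (Hs2 Ht3c).
    apply (C1_aux h dh lo hi t1 t3 Hd Hz Hlo); lra.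
Qed.

Lemma dich_left (h dh : R -> R) lo hi :
  (forall t, lo < t < hi -> is_derive h t (dh t)) ->
  (forall t, lo < t < hi -> h t = 0 -> 0 < dh t) ->
  (exists t, lo < t < hi /\ forall x, lo < x < t -> h x < 0) \/
  (forall x, lo < x < hi -> 0 < h x).
Proof.
  intros Hd Hz.
  destruct (classic (exists t, lo < t < hi /\ h t <= 0)) as [[t [Ht Hht]]|Hn].
  - left. exists t. split; auto. intros x Hx.
    destruct (Rlt_or_le (h x) 0) as [|Hge]; auto.
    assert (0 < h t) by (apply (C1 h dh lo hi x t); auto; lra). lra.
  - right. intros x Hx. destruct (Rlt_or_le 0 (h x)) as [|Hle]; auto.
    exfalso. apply Hn. exists x. auto.
Qed.

Lemma dich_right (h dh : R -> R) lo hi :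
  (forall t, lo < t < hi -> is_derive h t (dh t)) ->
  (forall t, lo < t < hi -> h t = 0 -> 0 < dh t) ->
  (exists t, lo < t < hi /\ forall x, t < x < hi -> 0 < h x) \/
  (forall x, lo < x < hi -> h x < 0).
Proof.
  intros Hd Hz.
  destruct (classic (exists t, lo < t < hi /\ 0 <= h t)) as [[t [Ht Hht]]|Hn].
  - left. exists t. split; auto. intros x Hx.
    apply (C1 h dh lo hi t x); auto; lra.
  - right. intros x Hx. destruct (Rlt_or_le (h x) 0) as [|Hle]; auto.
    exfalso. apply Hn. exists x. auto.
Qed.

Definition evI (lo hi x0 : R) (P : R -> Prop) :=
  exists del, 0 < del /\ forall x, lo < x < hi -> Rabs (x - x0) < del -> P x.

Lemma dich_ev (h dh : R -> R) lo hi x0 :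
  (forall t, lo < t < hi -> is_derive h t (dh t)) ->
  (forall t, lo < t < hi -> h t = 0 -> 0 < dh t) ->
  (x0 = lo \/ x0 = hi) ->
  evI lo hi x0 (fun x => 0 < h x) \/ evI lo hi x0 (fun x => h x < 0).
Proof.
  intros Hd Hz [->| ->].
  - destruct (dich_left h dh lo hi Hd Hz) as [[t [Ht Hx]]|Hall].
    + right. exists (t - lo). split. lra. intros x Hx1 Hx2.
      apply Rabs_def2 in Hx2. apply Hx. lra.
    + left. exists 1. split. lra. intros x Hx _. auto.
  - destruct (dich_right h dh lo hi Hd Hz) as [[t [Ht Hx]]|Hall].
    + left. exists (hi - t). split. lra. intros x Hx1 Hx2.
      apply Rabs_def2 in Hx2. apply Hx. lra.
    + right. exists 1. split. lra. intros x Hx _. auto.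
Qed.

Lemma rpow_nonneg u y : 0 <= rpow u y.
Proof.
  unfold rpow. destruct (Rle_dec u 0). lra. unfold Rpower. left; apply exp_pos.
Qed.

Lemma rpow_mono u v y : 0 <= u <= v -> 0 <= y -> rpow u y <= rpow v y.
Proof.
  intros Huv Hy. unfold rpow.
  destruct (Rle_dec u 0).
  - destruct (Rle_dec v 0). lra. unfold Rpower. left; apply exp_pos.
  - destruct (Rle_dec v 0). lra. apply Rle_Rpower_l; lra.
Qed.

Lemma Hloc alpha0 alpha1 gamma eta H phat :
  H_sqc alpha0 alpha1 gamma eta H phat ->
  forall x p q, Rabs (p - q) <= 1 ->
  Rabs (H x p - H x q) <= alpha1 * rpow (2 * Rabs q + 2) (gamma - 1) * Rabs (p - q).
Proof.
  intros [Ha0 [Ha1 [Hg [He [H1 [H2 _]]]]]] x p q Hpq.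
  eapply Rle_trans. apply H2.
  apply Rmult_le_compat_r. apply Rabs_pos.
  apply Rmult_le_compat_l. lra.
  apply rpow_mono; [|lra].
  assert (Rabs p <= Rabs q + 1).
  { replace p with ((p - q) + q) by ring.
    eapply Rle_trans. apply Rabs_triang. lra. }
  pose proof (Rabs_pos p). pose proof (Rabs_pos q). lra.
Qed.

Lemma Hdec alpha0 alpha1 gamma eta H phat :
  H_sqc alpha0 alpha1 gamma eta H phat ->
  forall x p1 p2, p1 < p2 -> p2 <= phat x -> H x p2 < H x p1.
Proof.
  intros [Ha0 [Ha1 [Hg [He [H1 [H2 [H3 [Hq [Hm [Hd Hi]]]]]]]]]] x p1 p2 H12 H2p.
  specialize (Hd x p1 p2 H12 H2p).
  rewrite Rabs_left in Hd by lra.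
  assert (0 < eta * - (p1 - p2)) by (apply Rmult_lt_0_compat; lra). lra.
Qed.

Lemma Hinc alpha0 alpha1 gamma eta H phat :
  H_sqc alpha0 alpha1 gamma eta H phat ->
  forall x p1 p2, p1 < p2 -> phat x <= p1 -> H x p1 < H x p2.
Proof.
  intros [Ha0 [Ha1 [Hg [He [H1 [H2 [H3 [Hq [Hm [Hd Hi]]]]]]]]]] x p1 p2 H12 H2p.
  specialize (Hi x p1 p2 ltac:(lra) ltac:(lra)).
  rewrite Rabs_left in Hi by lra.
  assert (0 < eta * - (p1 - p2)) by (apply Rmult_lt_0_compat; lra). lra.
Qed.

Lemma H_cont alpha0 alpha1 gamma eta H phat :
  H_sqc alpha0 alpha1 gamma eta H phat -> forall x, continuity (H x).
Proof.
  intros HH x p.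
  pose proof HH as [Ha0 [Ha1 _]].
  set (C := alpha1 * rpow (2 * Rabs p + 2) (gamma - 1)).
  assert (HC : 0 <= C) by (apply Rmult_le_pos; [lra|apply rpow_nonneg]).
  intros eps He. exists (Rmin 1 (eps / (C + 1))). split.
  apply Rmin_glb_lt; [lra| apply Rdiv_lt_0_compat; lra].
  intros y [_ Hy]. unfold R_dist in *. simpl in *. unfold R_dist in Hy.
  assert (Hy1 : Rabs (y - p) < 1) by (eapply Rlt_le_trans; [exact Hy| apply Rmin_l]).
  assert (Hy2 : Rabs (y - p) < eps / (C+1)) by (eapply Rlt_le_trans; [exact Hy| apply Rmin_r]).
  eapply Rle_lt_trans. apply (Hloc _ _ _ _ _ _ HH x y p); lra.
  fold C.
  apply Rmult_lt_compat_r with (r := C + 1) in Hy2; [|lra].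
  unfold Rdiv in Hy2. rewrite Rmult_assoc, Rinv_l, Rmult_1_r in Hy2 by lra.
  pose proof (Rabs_pos (y - p)). nra.
Qed.

Lemma ex_pp alpha0 alpha1 gamma eta H phat x0 lam :
  H_sqc alpha0 alpha1 gamma eta H phat -> H x0 (phat x0) <= lam ->
  exists pp, phat x0 <= pp /\ H x0 pp = lam.
Proof.
  intros HH Hl. pose proof HH as [Ha0 [Ha1 [Hg [He [H1 [H2 [H3 [Hq [Hm [Hd Hi]]]]]]]]]].
  set (P := phat x0). fold P in Hl.
  destruct (Rle_lt_or_eq_dec _ _ Hl) as [Hlt|Heq]; [|exists P; split; [lra|auto]].
  set (b := P + (lam - H x0 P) / eta).
  assert (Hb : P < b) by (unfold b; assert (0 < (lam - H x0 P)/eta) by (apply Rdiv_lt_0_compat; lra); lra).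
  assert (Hb2 : lam <= H x0 b).
  { specialize (Hi x0 P b ltac:(lra) ltac:(unfold P; lra)).
    rewrite Rabs_left in Hi by lra.
    replace (eta * - (P - b)) with (lam - H x0 P) in Hi by (unfold b; field; lra). lra. }
  destruct (IVT_gen (H x0) P b lam (H_cont _ _ _ _ _ _ HH x0)) as [z [Hz Hzv]].
  { rewrite Rmin_left, Rmax_right by lra. lra. }
  exists z. rewrite Rmin_left, Rmax_right in Hz by lra. split; [lra|auto].
Qed.

Lemma ex_pm alpha0 alpha1 gamma eta H phat x0 lam :
  H_sqc alpha0 alpha1 gamma eta H phat -> H x0 (phat x0) <= lam ->
  exists pm, pm <= phat x0 /\ H x0 pm = lam.
Proof.
  intros HH Hl. pose proof HH as [Ha0 [Ha1 [Hg [He [H1 [H2 [H3 [Hq [Hm [Hd Hi]]]]]]]]]].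
  set (P := phat x0). fold P in Hl.
  destruct (Rle_lt_or_eq_dec _ _ Hl) as [Hlt|Heq]; [|exists P; split; [lra|auto]].
  set (b := P - (lam - H x0 P) / eta).
  assert (Hb : b < P) by (unfold b; assert (0 < (lam - H x0 P)/eta) by (apply Rdiv_lt_0_compat; lra); lra).
  assert (Hb2 : lam <= H x0 b).
  { specialize (Hd x0 b P ltac:(lra) ltac:(unfold P; lra)).
    rewrite Rabs_left in Hd by lra.
    replace (eta * - (b - P)) with (lam - H x0 P) in Hd by (unfold b; field; lra). lra. }
  destruct (IVT_gen (H x0) b P lam (H_cont _ _ _ _ _ _ HH x0)) as [z [Hz Hzv]].
  { rewrite Rmin_right, Rmax_left by lra. lra. }
  exists z. rewrite Rmin_left, Rmax_right in Hz by lra. split; [lra|auto].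
Qed.

Lemma sublevel_final alpha0 alpha1 gamma eta H phat x0 lam L :
  H_sqc alpha0 alpha1 gamma eta H phat -> H x0 (phat x0) <= lam -> H x0 L = lam ->
  exists pm pp : R, sublevel_ends H x0 lam pm pp /\ (L = pm \/ L = pp).
Proof.
  intros HH Hl HL.
  destruct (ex_pm _ _ _ _ _ _ x0 lam HH Hl) as [pm [Hpm1 Hpm2]].
  destruct (ex_pp _ _ _ _ _ _ x0 lam HH Hl) as [pp [Hpp1 Hpp2]].
  pose proof (Hdec _ _ _ _ _ _ HH x0) as Dd.
  pose proof (Hinc _ _ _ _ _ _ HH x0) as Di.
  set (P := phat x0) in *.
  assert (Hsub : forall p, H x0 p <= lam <-> pm <= p <= pp).
  { intros p. split.
    - intros Hp. split.
      + destruct (Rle_or_lt pm p); auto. specialize (Dd p pm H0 Hpm1). lra.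
      + destruct (Rle_or_lt p pp); auto. specialize (Di pp p H0 Hpp1). lra.
    - intros [Hp1 Hp2]. destruct (Rle_or_lt p P).
      + destruct (Rle_lt_or_eq_dec _ _ Hp1) as [Hlt|Heq]; [|rewrite <- Heq; lra].
        specialize (Dd pm p Hlt H0). lra.
      + destruct (Rle_lt_or_eq_dec _ _ Hp2) as [Hlt|Heq]; [|rewrite Heq; lra].
        specialize (Di p pp Hlt ltac:(lra)). lra. }
  exists pm, pp. split. split. lra. exact Hsub.
  assert (HLi : pm <= L <= pp) by (apply Hsub; lra).
  destruct (Rle_or_lt L P).
  - left. destruct (Rle_lt_or_eq_dec _ _ (proj1 HLi)) as [Hlt|]; auto.
    specialize (Dd pm L Hlt H0). lra.
  - right. destruct (Rle_lt_or_eq_dec _ _ (proj2 HLi)) as [Hlt|]; auto.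
    specialize (Di L pp Hlt ltac:(lra)). lra.
Qed.

Lemma g_deriv (f : R -> R) (s dl K x0 x : R) : ex_derive f x -> x <> x0 -> K <> 0 ->
  is_derive (fun y => s * f y + dl / (K * (y - x0))) x (s * Derive f x - dl / (K * (x - x0)^2)).
Proof.
  intros Hf Hx HK. auto_derive.
  - repeat split; auto. apply Rmult_integral_contrapositive. split; auto. lra.
  - change (fun x1 : R => f x1) with f. field. split; auto. lra.
Qed.

Lemma big_inv (dl K T : R) : 0 < dl -> 0 < K -> 0 < T ->
  exists e, 0 < e /\ (forall r, 0 < r -> r <= e -> T <= dl / (K * r)) /\ 
     (forall u, 0 < u -> exists e', 0 < e' /\ e' <= e /\ e' <= u).
Proof.
  intros Hd HK HT. exists (dl / (K * T)). split.
  apply Rdiv_lt_0_compat; nra.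
  split.
  - intros r Hr Her.
    apply Rmult_le_reg_r with (r := K * r). nra.
    unfold Rdiv. rewrite Rmult_assoc, Rinv_l, Rmult_1_r by nra.
    apply Rmult_le_compat_r with (r := K * T) in Her; [|nra].
    unfold Rdiv in Her. rewrite Rmult_assoc, Rinv_l, Rmult_1_r in Her by nra.
    nra.
  - intros u Hu. exists (Rmin u (dl / (K * T))). split.
    apply Rmin_glb_lt; auto. apply Rdiv_lt_0_compat; nra.
    split. apply Rmin_r. apply Rmin_l.
Qed.

Lemma blowup (f : R -> R) (c d x0 K M s dl rho : R) :
  c < d -> (x0 = c \/ x0 = d) -> 0 < K -> 0 < dl -> 0 < rho -> (s = 1 \/ s = -1) ->
  (forall x, c < x < d -> ex_derive f x) ->
  (forall x, c < x < d -> Rabs (f x) <= M) ->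
  (forall x, c < x < d -> Rabs (x - x0) < rho -> dl <= s * Derive f x * (K * (x - x0)^2)) ->
  False.
Proof.
  intros Hcd Hx0 HK Hdl Hrho Hs Hdf HM Hin.
  set (r := Rmin rho (d - c)).
  assert (Hr1 : r <= rho) by apply Rmin_l.
  assert (Hr2 : r <= d - c) by apply Rmin_r.
  assert (Hr0 : 0 < r) by (apply Rmin_glb_lt; lra).
  set (g := fun y => s * f y + dl / (K * (y - x0))).
  set (dg := fun y => s * Derive f y - dl / (K * (y - x0)^2)).
  assert (Hsf : forall x, c < x < d -> - M <= s * f x <= M).
  { intros x Hx. specialize (HM x Hx). pose proof (Rle_abs (f x)). pose proof (Rle_abs (- f x)). rewrite Rabs_Ropp in *.
    destruct Hs as [-> | ->]; lra. }
  assert (Hdg : forall x, c < x < d -> Rabs (x - x0) < rho -> 0 <= dg x).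
  { intros x Hx Hxr. specialize (Hin x Hx Hxr). unfold dg.
    assert (Hne : x - x0 <> 0) by (destruct Hx0; subst; lra).
    assert (Hp : 0 < K * (x - x0)^2) by (apply Rmult_lt_0_compat; auto; apply pow2_gt_0; auto).
    apply Rmult_le_reg_r with (r := K * (x - x0)^2); auto.
    rewrite Rmult_0_l, Rmult_minus_distr_r.
    replace (dl / (K * (x - x0) ^ 2) * (K * (x - x0) ^ 2)) with dl by (field; lra). lra. }
  assert (Hgd : forall x, c < x < d -> x <> x0 -> is_derive g x (dg x)).
  { intros x Hx Hne. apply g_deriv; auto. lra. }
  set (T := 2 * M + 2 * dl / (K * r) + 1).
  assert (HM0 : 0 <= M) by (pose proof (HM ((c+d)/2) ltac:(lra)); pose proof (Rabs_pos (f ((c+d)/2))); lra).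
  assert (Hq : 0 < 2 * dl / (K * r)) by (apply Rdiv_lt_0_compat; nra).
  assert (HT : 0 < T) by (unfold T; lra).
  destruct (big_inv dl K T Hdl HK HT) as [e [He [Hbig Hsm]]].
  destruct (Hsm (r/2) ltac:(lra)) as [e' [He' [He'1 He'2]]].
  assert (Hbe : T <= dl / (K * e')) by (apply Hbig; auto).
  destruct Hx0 as [-> | ->].
  -
    assert (Hmono : g (c + e') <= g (c + r/2)).
    { apply (mono_lem g dg c (c + r)).
      - intros t Ht. apply Hgd; lra.
      - intros t Ht. apply Hdg. lra. apply Rabs_def1; lra.
      - lra. - lra. - lra. }
    unfold g in Hmono.
    replace (c + e' - c) with e' in Hmono by ring.
    replace (c + r / 2 - c) with (r/2) in Hmono by ring.
    replace (dl / (K * (r/2))) with (2 * dl / (K * r)) in Hmono by (field; lra).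
    pose proof (Hsf (c + e') ltac:(lra)). pose proof (Hsf (c + r/2) ltac:(lra)).
    unfold T in Hbe. lra.
  -
    assert (Hmono : g (d - r/2) <= g (d - e')).
    { apply (mono_lem g dg (d - r) d).
      - intros t Ht. apply Hgd; lra.
      - intros t Ht. apply Hdg. lra. apply Rabs_def1; lra.
      - lra. - lra. - lra. }
    unfold g in Hmono.
    replace (dl / (K * (d - e' - d))) with (- (dl / (K * e'))) in Hmono by (field; lra).
    replace (dl / (K * (d - r/2 - d))) with (- (2 * dl / (K * r))) in Hmono by (field; lra).
    pose proof (Hsf (d - e') ltac:(lra)). pose proof (Hsf (d - r/2) ltac:(lra)).
    unfold T in Hbe. lra.
Qed.

Lemma adjacent (c d x0 rho : R) : c < d -> (x0 = c \/ x0 = d) -> 0 < rho ->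
  exists lo hi r, lo < hi /\ (x0 = lo \/ x0 = hi) /\ 0 < r /\
   (forall x, lo < x < hi -> c < x < d /\ Rabs (x - x0) < rho) /\
   (forall x, c < x < d -> Rabs (x - x0) < r -> lo < x < hi).
Proof.
  intros Hcd Hx0 Hr.
  set (r := Rmin rho (d - c)).
  assert (Hr1 : r <= rho) by apply Rmin_l.
  assert (Hr2 : r <= d - c) by apply Rmin_r.
  assert (Hr0 : 0 < r) by (apply Rmin_glb_lt; lra).
  destruct Hx0 as [-> | ->].
  - exists c, (c + r), r. split; [lra|]. split; [lra|]. split; [lra|]. split.
    + intros x Hx. split. lra. apply Rabs_def1; lra.
    + intros x Hx Hxr. apply Rabs_def2 in Hxr. lra.
  - exists (d - r), d, r. split; [lra|]. split; [lra|]. split; [lra|]. split.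
    + intros x Hx. split. lra. apply Rabs_def1; lra.
    + intros x Hx Hxr. apply Rabs_def2 in Hxr. lra.
Qed.

Lemma evI_conv lo hi c d x0 r (P : R -> Prop) : 0 < r ->
  (forall x, c < x < d -> Rabs (x - x0) < r -> lo < x < hi) ->
  evI lo hi x0 P -> evI c d x0 P.
Proof.
  intros Hr Hadj [del [Hdel HP]]. exists (Rmin del r). split.
  apply Rmin_glb_lt; auto.
  intros x Hx Hxr. apply HP.
  apply Hadj; auto. eapply Rlt_le_trans; [exact Hxr| apply Rmin_r].
  eapply Rlt_le_trans; [exact Hxr| apply Rmin_l].
Qed.

Lemma evI_and lo hi x0 (P Q : R -> Prop) :
  evI lo hi x0 P -> evI lo hi x0 Q -> evI lo hi x0 (fun x => P x /\ Q x).
Proof.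
  intros [d1 [H1 P1]] [d2 [H2 P2]]. exists (Rmin d1 d2). split.
  apply Rmin_glb_lt; auto.
  intros x Hx Hxr. split.
  apply P1; auto. eapply Rlt_le_trans; [exact Hxr| apply Rmin_l].
  apply P2; auto. eapply Rlt_le_trans; [exact Hxr| apply Rmin_r].
Qed.

Lemma evI_mono lo hi x0 (P Q : R -> Prop) :
  (forall x, P x -> Q x) -> evI lo hi x0 P -> evI lo hi x0 Q.
Proof.
  intros HPQ [d1 [H1 P1]]. exists d1. split; auto.
Qed.

Lemma evI_proper c d x0 (P : R -> Prop) : c < d -> (x0 = c \/ x0 = d) ->
  evI c d x0 P -> exists x, c < x < d /\ P x.
Proof.
  intros Hcd Hx0 [del [Hdel HP]].
  set (r := Rmin del (d - c)).
  assert (Hr1 : r <= del) by apply Rmin_l.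
  assert (Hr2 : r <= d - c) by apply Rmin_r.
  assert (Hr0 : 0 < r) by (apply Rmin_glb_lt; lra).
  destruct Hx0 as [-> | ->].
  - exists (c + r/2). split. lra. apply HP. lra. apply Rabs_def1; lra.
  - exists (d - r/2). split. lra. apply HP. lra. apply Rabs_def1; lra.
Qed.

Lemma der_minus (f : R -> R) (q x : R) : ex_derive f x ->
  is_derive (fun y => f y - q) x (Derive f x).
Proof.
  intros Hf. auto_derive. auto. change (fun x1 : R => f x1) with f. ring.
Qed.

Lemma der_minus2 (f : R -> R) (q x : R) : ex_derive f x ->
  is_derive (fun y => q - f y) x (- Derive f x).
Proof.
  intros Hf. auto_derive. auto. change (fun x1 : R => f x1) with f. ring.
Qed.

Theorem mainTheorem9
  (kappa alpha0 alpha1 gamma eta : R) (a : R -> R) (H : R -> R -> R)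
  (phat : R -> R)
  (Ha : diffusion_ok kappa a)
  (HH : H_sqc alpha0 alpha1 gamma eta H phat)
  (c d : R) (Hcd : c < d)
  (Hpos : forall x, c < x < d -> 0 < a x)
  (x0 : R) (Hx0 : x0 = c \/ x0 = d) (Hax0 : a x0 = 0)
  (lam : R) (f : R -> R)
  (Hdiff : forall x, c < x < d -> ex_derive f x)
  (Hcont : forall x, c < x < d -> continuous (Derive f) x)
  (Hbdd : exists M, forall x, c < x < d -> Rabs (f x) <= M)
  (Heq : forall x, c < x < d -> a x * Derive f x + H x (f x) = lam) :
  lam >= H x0 (phat x0) /\
  exists L : R,
    filterlim f (within (fun x => c < x < d) (locally x0)) (locally L) /\
    exists pm pp : R, sublevel_ends H x0 lam pm pp /\ (L = pm \/ L = pp).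
Proof.
  destruct Ha as [Ha01 Hlip].
  pose proof HH as [Ha0 [Ha1 [Hg [He [H1 [H2 [H3 [Hq [Hm [Hd Hi]]]]]]]]]].
  destruct Hbdd as [M HM].
  assert (HM0 : 0 <= M) by (pose proof (HM ((c+d)/2) ltac:(lra)); pose proof (Rabs_pos (f ((c+d)/2))); lra).
  assert (Hne : forall x, c < x < d -> x - x0 <> 0) by (intros x Hx; destruct Hx0; subst; lra).
  assert (Hkap : 0 < kappa).
  { set (m := (c+d)/2). assert (Ham : 0 < a m) by (apply Hpos; unfold m; lra).
    specialize (Hlip m x0). rewrite Hax0, sqrt_0, Rminus_0_r in Hlip.
    pose proof (sqrt_lt_R0 _ Ham). rewrite Rabs_right in Hlip by lra.
    assert (0 < Rabs (m - x0)) by (apply Rabs_pos_lt; apply Hne; unfold m; lra).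
    destruct (Rle_or_lt kappa 0); auto. nra. }
  set (K := kappa ^ 2).
  assert (HK : 0 < K) by (unfold K; apply pow_lt; auto).
  assert (Habd : forall x, a x <= K * (x - x0)^2).
  { intros x. specialize (Hlip x x0). rewrite Hax0, sqrt_0, Rminus_0_r in Hlip.
    pose proof (sqrt_pos (a x)). rewrite Rabs_right in Hlip by lra.
    pose proof (sqrt_sqrt (a x) (proj1 (Ha01 x))).
    pose proof (Rabs_pos (x - x0)).
    rewrite <- (pow2_abs (x - x0)). unfold K.
    assert (sqrt (a x) * sqrt (a x) <= (kappa * Rabs (x - x0)) * (kappa * Rabs (x - x0)))
      by (apply Rmult_le_compat; lra). nra. }
  assert (Hder : forall x, c < x < d -> Derive f x = (lam - H x (f x)) / a x).
  { intros x Hx. specialize (Heq x Hx). specialize (Hpos x Hx). field_simplify_eq; lra. }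
  assert (BU : forall s dl rho, (s = 1 \/ s = -1) -> 0 < dl -> 0 < rho ->
     (forall x, c < x < d -> Rabs (x - x0) < rho -> dl <= s * (lam - H x (f x))) -> False).
  { intros s dl rho Hs Hdl Hrho Hin.
    apply (blowup f c d x0 K M s dl rho Hcd Hx0 HK Hdl Hrho Hs Hdiff HM).
    intros x Hx Hxr. specialize (Hin x Hx Hxr).
    rewrite (Hder x Hx).
    assert (Hax : 0 < a x) by auto.
    replace (s * ((lam - H x (f x)) / a x) * (K * (x - x0) ^ 2))
      with ((s * (lam - H x (f x))) * ((K * (x - x0) ^ 2) / a x)) by (field; lra).
    assert (1 <= (K * (x - x0) ^ 2) / a x).
    { apply Rmult_le_reg_r with (r := a x); auto.
      replace (K * (x - x0) ^ 2 / a x * a x) with (K * (x - x0) ^ 2) by (field; lra).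
      specialize (Habd x). lra. }
    nra. }
  assert (Part1 : H x0 (phat x0) <= lam).
  { destruct (Rle_or_lt (H x0 (phat x0)) lam) as [|Hlt]; auto. exfalso.
    set (dl := (H x0 (phat x0) - lam) / 2).
    set (Cst := alpha1 * (rpow M gamma + 1)).
    assert (HC : 0 < Cst) by (unfold Cst; pose proof (rpow_nonneg M gamma); nra).
    apply (BU (-1) dl (dl / Cst)); [lra | unfold dl; lra | apply Rdiv_lt_0_compat; unfold dl; lra |].
    intros x Hx Hxr.
    specialize (H3 x x0 (f x)).
    pose proof (Rle_abs (- (H x (f x) - H x0 (f x)))) as Hab. rewrite Rabs_Ropp in Hab.
    assert (Hrp : rpow (Rabs (f x)) gamma <= rpow M gamma).
    { apply rpow_mono. split. apply Rabs_pos. auto. lra. }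
    assert (Hb1 : alpha1 * (rpow (Rabs (f x)) gamma + 1) * Rabs (x - x0) <= Cst * Rabs (x - x0)).
    { apply Rmult_le_compat_r. apply Rabs_pos. unfold Cst. apply Rmult_le_compat_l; lra. }
    assert (Hb2 : Cst * Rabs (x - x0) < dl).
    { apply Rmult_lt_compat_l with (r := Cst) in Hxr; auto.
      replace (Cst * (dl / Cst)) with dl in Hxr by (field; lra). auto. }
    destruct (Hm x0) as [Hmin _]. specialize (Hmin (f x)).
    unfold dl in *. lra. }
  assert (Dich : forall q, H x0 q <> lam ->
     evI c d x0 (fun x => q < f x) \/ evI c d x0 (fun x => f x < q)).
  { intros q Hq0.
    set (u := lam - H x0 q).
    assert (Hu : 0 < Rabs u) by (apply Rabs_pos_lt; unfold u; lra).
    set (Cq := alpha1 * (rpow (Rabs q) gamma + 1)).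
    assert (HCq : 0 < Cq) by (unfold Cq; pose proof (rpow_nonneg (Rabs q) gamma); nra).
    assert (Hrho : 0 < Rabs u / (2 * Cq)) by (apply Rdiv_lt_0_compat; lra).
    destruct (adjacent c d x0 (Rabs u / (2*Cq)) Hcd Hx0 Hrho)
      as [lo [hi [r [Hlh [Hx0' [Hr [Hin Hadj]]]]]]].
    assert (Hclose : forall x, lo < x < hi -> Rabs (H x q - H x0 q) < Rabs u / 2).
    { intros x Hx. destruct (Hin x Hx) as [_ Hxr]. eapply Rle_lt_trans. apply H3. fold Cq.
      apply Rmult_lt_compat_l with (r := Cq) in Hxr; auto.
      replace (Cq * (Rabs u / (2 * Cq))) with (Rabs u / 2) in Hxr by (field; lra). exact Hxr. }
    destruct (Rlt_or_le 0 u) as [Hup|Hun].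
    - rewrite Rabs_right in Hclose by lra.
      destruct (dich_ev (fun y => f y - q) (Derive f) lo hi x0) as [E|E]; auto.
      + intros t Ht. apply der_minus. apply Hdiff. apply Hin; auto.
      + intros t Ht Hz. assert (Hft : f t = q) by lra. destruct (Hin t Ht) as [Htj _].
        rewrite (Hder t Htj), Hft. specialize (Hclose t Ht). apply Rabs_def2 in Hclose.
        apply Rdiv_lt_0_compat. unfold u in *; lra. auto.
      + left. apply (evI_conv lo hi c d x0 r); auto. eapply evI_mono; [|exact E]. simpl; intros; lra.
      + right. apply (evI_conv lo hi c d x0 r); auto. eapply evI_mono; [|exact E]. simpl; intros; lra.
    - assert (Hul : u < 0) by (destruct Hun; auto; unfold u in *; lra).
      rewrite Rabs_left in Hclose by lra.
      destruct (dich_ev (fun y => q - f y) (fun y => - Derive f y) lo hi x0) as [E|E]; auto.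
      + intros t Ht. apply der_minus2. apply Hdiff. apply Hin; auto.
      + intros t Ht Hz. assert (Hft : f t = q) by lra. destruct (Hin t Ht) as [Htj _].
        rewrite (Hder t Htj), Hft. specialize (Hclose t Ht). apply Rabs_def2 in Hclose.
        assert (Hat : 0 < a t) by auto.
        replace (- ((lam - H t q) / a t)) with ((H t q - lam) / a t) by (field; lra).
        apply Rdiv_lt_0_compat. unfold u in *; lra. auto.
      + right. apply (evI_conv lo hi c d x0 r); auto. eapply evI_mono; [|exact E]. simpl; intros; lra.
      + left. apply (evI_conv lo hi c d x0 r); auto. eapply evI_mono; [|exact E]. simpl; intros; lra. }
  set (S := fun q => evI c d x0 (fun x => q < f x)).
  destruct (completeness S) as [L [Hub Hlub]].
  { exists M. intros q Sq. destruct (evI_proper c d x0 _ Hcd Hx0 Sq) as [x [Hx Hqx]].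
    pose proof (HM x Hx); pose proof (Rle_abs (f x)); lra. }
  { exists (-M-1). exists 1. split. lra. intros x Hx _. pose proof (HM x Hx).
    pose proof (Rle_abs (- f x)); rewrite Rabs_Ropp in *; lra. }
  assert (Good : forall eps, 0 < eps -> exists q, L + eps/4 <= q <= L + 3*eps/4 /\ H x0 q <> lam).
  { intros eps Heps.
    destruct (classic (H x0 (L + eps/4) = lam)) as [E1|E1]; [|exists (L+eps/4); split; [lra|auto]].
    destruct (classic (H x0 (L + eps/2) = lam)) as [E2|E2]; [|exists (L+eps/2); split; [lra|auto]].
    destruct (classic (H x0 (L + 3*eps/4) = lam)) as [E3|E3]; [|exists (L+3*eps/4); split; [lra|auto]].
    exfalso. destruct (Rle_or_lt (L + eps/2) (phat x0)) as [Hp|Hp].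
    - pose proof (Hdec _ _ _ _ _ _ HH x0 (L+eps/4) (L+eps/2) ltac:(lra) Hp). lra.
    - pose proof (Hinc _ _ _ _ _ _ HH x0 (L+eps/2) (L+3*eps/4) ltac:(lra) ltac:(lra)). lra. }
  assert (Conv : forall eps, 0 < eps -> evI c d x0 (fun x => Rabs (f x - L) < eps)).
  { intros eps Heps.
    assert (Ea : evI c d x0 (fun x => L - eps < f x)).
    { destruct (classic (exists q, S q /\ L - eps < q)) as [[q [Sq Hq']]|Hn].
      - eapply evI_mono; [|exact Sq]. simpl; intros; lra.
      - exfalso. assert (L <= L - eps); [|lra]. apply Hlub. intros q Sq.
        destruct (Rle_or_lt q (L - eps)); auto. exfalso; apply Hn; exists q; auto. }
    destruct (Good eps Heps) as [q [Hq1 Hq2]].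
    assert (Eb : evI c d x0 (fun x => f x < q)).
    { destruct (Dich q Hq2) as [E|E]; auto. exfalso. assert (q <= L) by (apply Hub; exact E). lra. }
    eapply evI_mono; [|exact (evI_and _ _ _ _ _ Ea Eb)]. simpl. intros x [Hx1 Hx2].
    apply Rabs_def1; lra. }
  split. lra. exists L. split.
  { intros P [eps HP]. destruct (Conv eps (cond_pos eps)) as [del [Hdel Hev]].
    exists (mkposreal del Hdel). intros y Hy Hyd. apply HP.
    change (Rabs (f y - L) < eps). apply Hev; auto. }
  assert (HL : H x0 L = lam).
  { destruct (Req_dec (H x0 L) lam) as [|Hn]; auto. exfalso.
    set (u := lam - H x0 L).
    assert (Hu : 0 < Rabs u) by (apply Rabs_pos_lt; unfold u; lra).
    set (C1 := alpha1 * rpow (2 * Rabs L + 2) (gamma - 1)).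
    assert (HC1 : 0 <= C1) by (apply Rmult_le_pos; [lra|apply rpow_nonneg]).
    set (C2 := alpha1 * (rpow (Rabs L) gamma + 1)).
    assert (HC2 : 0 < C2) by (unfold C2; pose proof (rpow_nonneg (Rabs L) gamma); nra).
    set (e1 := Rmin 1 (Rabs u / (4 * (C1 + 1)))).
    assert (He1 : 0 < e1) by (apply Rmin_glb_lt; [lra| apply Rdiv_lt_0_compat; lra]).
    destruct (Conv e1 He1) as [del [Hdel Hev]].
    set (rho := Rmin del (Rabs u / (4 * C2))).
    assert (Hrho : 0 < rho) by (apply Rmin_glb_lt; [lra| apply Rdiv_lt_0_compat; lra]).
    assert (Hcl : forall x, c < x < d -> Rabs (x - x0) < rho ->
                Rabs (H x (f x) - H x0 L) < Rabs u / 2).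
    { intros x Hx Hxr.
      assert (Hxr1 : Rabs (x - x0) < del) by (eapply Rlt_le_trans; [exact Hxr| apply Rmin_l]).
      assert (Hxr2 : Rabs (x - x0) < Rabs u / (4 * C2)) by (eapply Rlt_le_trans; [exact Hxr| apply Rmin_r]).
      specialize (Hev x Hx Hxr1).
      assert (Hf1 : Rabs (f x - L) < 1) by (eapply Rlt_le_trans; [exact Hev| apply Rmin_l]).
      assert (Hf2 : Rabs (f x - L) < Rabs u / (4 * (C1 + 1))) by (eapply Rlt_le_trans; [exact Hev| apply Rmin_r]).
      assert (T1 : Rabs (H x (f x) - H x L) <= C1 * Rabs (f x - L)) by (apply (Hloc _ _ _ _ _ _ HH); lra).
      assert (T1' : C1 * Rabs (f x - L) <= Rabs u / 4).
      { eapply Rle_trans. apply Rmult_le_compat_l. exact HC1. left; exact Hf2.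
        assert (Rabs u / 4 - C1 * (Rabs u / (4 * (C1 + 1))) = Rabs u / (4 * (C1 + 1))) by (field; lra).
        assert (0 <= Rabs u / (4 * (C1 + 1))) by (left; apply Rdiv_lt_0_compat; lra). lra. }
      assert (T2 : Rabs (H x L - H x0 L) <= C2 * Rabs (x - x0)) by apply H3.
      assert (T2' : C2 * Rabs (x - x0) < Rabs u / 4).
      { apply Rmult_lt_compat_l with (r := C2) in Hxr2; auto.
        replace (C2 * (Rabs u / (4 * C2))) with (Rabs u / 4) in Hxr2 by (field; lra). auto. }
      replace (H x (f x) - H x0 L) with ((H x (f x) - H x L) + (H x L - H x0 L)) by ring.
      eapply Rle_lt_trans. apply Rabs_triang. lra. }
    destruct (Rlt_or_le 0 u) as [Hup|Hun].
    - apply (BU 1 (Rabs u / 2) rho); auto; [lra|].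
      intros x Hx Hxr. specialize (Hcl x Hx Hxr). apply Rabs_def2 in Hcl.
      rewrite Rabs_right in * by lra. unfold u in *. lra.
    - assert (Hul : u < 0) by (destruct Hun; auto; unfold u in *; lra).
      apply (BU (-1) (Rabs u / 2) rho); auto; [lra|].
      intros x Hx Hxr. specialize (Hcl x Hx Hxr). apply Rabs_def2 in Hcl.
      rewrite Rabs_left in * by lra. unfold u in *. lra. }
  apply (sublevel_final _ _ _ _ _ _ x0 lam L HH Part1 HL).
Qed.
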